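(* Let $\alpha,\beta,\theta,\gamma>0$ and let $\{X(t):t\ge 0\}$ be the continuous-time birth and death process on $\mathbb{Z}$ with birth rates $\lambda_i=\alpha+i^-\gamma$ and death rates $\mu_i=\beta+i^+\theta$, $i\in\mathbb{Z}$. Let $\{\pi_i:i\in\mathbb{Z}\}$ be its (unique) stationary distribution, given by $\pi_i=\frac{\alpha^i}{\prod_{j=1}^i(\beta+j\theta)}\pi_0$, $\pi_{-i}=\frac{\beta^i}{\prod_{j=1}^i(\alpha+j\gamma)}\pi_0$ for $i\in\mathbb{N}$, with $\pi_0=\Big(1+\sum_{i\ge1}\frac{\alpha^i}{\prod_{j=1}^i(\beta+j\theta)}+\sum_{i\ge1}\frac{\beta^i}{\prod_{j=1}^i(\alpha+j\gamma)}\Big)^{-1}$. Then for every $x\in\mathbb{Z}$ and every $s\ge0$, $$\lim_{t\to\infty}\mathbb{E}_x\big[e^{s|X(t)|}\big]=\sum_{i=-\infty}^{\infty}e^{s|i|}\pi_i .$$ Moreover, for every measurable $f:\mathbb{Z}\to\mathbb{R}$ such that for some $s\ge0$, $|f(y)|\le e^{s|y|}$ for all $y\in\mathbb{Z}$, we have $\lim_{t\to\infty}\mathbb{E}_x[f(X(t))]=\sum_{i=-\infty}^\infty f(i)\pi_i$.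
   Context: This process is the queue length of a double-ended queue with Poisson arrivals: sellers arrive at rate $\alpha$, buyers at rate $\beta$, waiting sellers abandon at rate $\theta$ each and waiting buyers at rate $\gamma$ each; $X(t)>0$ means $X(t)$ sellers wait, $X(t)<0$ means $-X(t)$ buyers wait. For $a\in\mathbb{R}$, $a^+=\max\{a,0\}$, $a^-=\max\{0,-a\}$. $\mathbb{E}_x$ denotes expectation given $X(0)=x$. *)

(* Defs.v *)
From Stdlib Require Import Reals Lra Lia ZArith.
Open Scope R_scope.

Definition zpos (i : Z) : R := IZR (Z.max 0 i).
Definition zneg (i : Z) : R := IZR (Z.max 0 (- i)).

Definition birth (al ga : R) (i : Z) : R := al + zneg i * ga.
Definition death (be th : R) (i : Z) : R := be + zpos i * th.

Definition symsum (g : Z -> R) (N : nat) : R :=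
  sum_f_R0 (fun k => g (Z.of_nat k - Z.of_nat N)%Z) (2 * N).

Definition Zhas_sum (g : Z -> R) (l : R) : Prop :=
  (exists M, forall N, symsum (fun i => Rabs (g i)) N <= M) /\
  Un_cv (symsum g) l.

Fixpoint wprod (c d e : R) (n : nat) : R :=
  match n with
  | O => 1
  | S m => wprod c d e m * (c / (d + INR (S m) * e))
  end.

(* unnormalised stationary weights: w 0 = 1,
   w i = al^i / prod_{j=1}^i (be + j th),  w (-i) = be^i / prod_{j=1}^i (al + j ga) *)
Definition stat_weight (al be th ga : R) (i : Z) : R :=
  if (0 <=? i)%Z then wprod al be th (Z.to_nat i)
  else wprod be al ga (Z.to_nat (- i)).

(* P : R -> Z -> Z -> R is a substochastic solution of the backward Kolmogorov
   equations of the birth–death process with rates birth/death, started from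
   the identity. (Since the process is non-explosive, this is exactly its
   transition function P t x y = P_x(X(t) = y).) *)
Definition bd_transition (al be th ga : R) (P : R -> Z -> Z -> R) : Prop :=
  (forall t x y, 0 <= t -> 0 <= P t x y) /\
  (forall t x N, 0 <= t -> symsum (P t x) N <= 1) /\
  (forall x y, P 0 x y = if Z.eq_dec x y then 1 else 0) /\
  (forall x y eps, 0 < eps -> exists delta, 0 < delta /\
      forall t, 0 <= t < delta -> Rabs (P t x y - P 0 x y) < eps) /\
  (forall t x y, 0 < t ->
      derivable_pt_lim (fun u => P u x y) t
        (birth al ga x * P t (x + 1)%Z y + death be th x * P t (x - 1)%Z y
         - (birth al ga x + death be th x) * P t x y)).

Definition Zsum_tends (F : R -> Z -> R) (L : R) : Prop :=
  (exists T, forall t, T <= t -> exists e, Zhas_sum (F t) e) /\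
  (forall eps, 0 < eps -> exists T, forall t e, T <= t -> Zhas_sum (F t) e ->
      Rabs (e - L) < eps).

(* Main.v *)
Require Import Defs.
From Stdlib Require Import Reals Lra Lia ZArith.
Open Scope R_scope.

Lemma symsum_0 (g : Z -> R) : symsum g 0 = g 0%Z.
Proof. unfold symsum. simpl. f_equal. Qed.

Lemma symsum_S (g : Z -> R) (N : nat) :
  symsum g (S N) = symsum g N + g (Z.of_nat (S N)) + g (- Z.of_nat (S N))%Z.
Proof.
  unfold symsum.
  replace (2 * S N)%nat with (S (S (2 * N))) by lia.
  rewrite tech5.
  rewrite decomp_sum by lia. change (Init.Nat.pred (S (2 * N)%nat)) with (2 * N)%nat.
  replace (sum_f_R0 (fun i : nat => g (Z.of_nat (S i) - Z.of_nat (S N))%Z) (2 * N))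
    with (sum_f_R0 (fun k : nat => g (Z.of_nat k - Z.of_nat N)%Z) (2 * N)).
  2:{ apply sum_eq. intros i _. f_equal. lia. }
  replace (Z.of_nat (S (S (2 * N))) - Z.of_nat (S N))%Z with (Z.of_nat (S N)) by lia.
  replace (Z.of_nat 0 - Z.of_nat (S N))%Z with (- Z.of_nat (S N))%Z by lia.
  ring.
Qed.

Definition inr (N : nat) (z : Z) : Prop := (- Z.of_nat N <= z <= Z.of_nat N)%Z.

Lemma inr_S N z : inr (S N) z -> inr N z \/ z = Z.of_nat (S N) \/ z = (- Z.of_nat (S N))%Z.
Proof. unfold inr. lia. Qed.

Lemma symsum_ext (f g : Z -> R) N : (forall z, inr N z -> f z = g z) -> symsum f N = symsum g N.
Proof.
  induction N; intros H.
  - rewrite !symsum_0. apply H. unfold inr; lia.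
  - rewrite !symsum_S. rewrite IHN. rewrite (H (Z.of_nat (S N))), (H (- Z.of_nat (S N))%Z).
    reflexivity. all: unfold inr in *; try lia. intros z Hz; apply H; unfold inr in *; lia.
Qed.

Lemma symsum_plus (f g : Z -> R) N : symsum (fun z => f z + g z) N = symsum f N + symsum g N.
Proof. induction N. rewrite !symsum_0; ring. rewrite !symsum_S, IHN; ring. Qed.

Lemma symsum_minus (f g : Z -> R) N : symsum (fun z => f z - g z) N = symsum f N - symsum g N.
Proof. induction N. rewrite !symsum_0; ring. rewrite !symsum_S, IHN; ring. Qed.

Lemma symsum_scal (c : R) (f : Z -> R) N : symsum (fun z => c * f z) N = c * symsum f N.
Proof. induction N. rewrite !symsum_0; ring. rewrite !symsum_S, IHN; ring. Qed.

Lemma symsum_le (f g : Z -> R) N : (forall z, f z <= g z) -> symsum f N <= symsum g N.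
Proof. intros H. induction N. rewrite !symsum_0; auto. rewrite !symsum_S.
  pose proof (H (Z.of_nat (S N))); pose proof (H (- Z.of_nat (S N))%Z); lra. Qed.

Lemma symsum_nonneg (f : Z -> R) N : (forall z, 0 <= f z) -> 0 <= symsum f N.
Proof. intros H. induction N. rewrite !symsum_0; auto. rewrite !symsum_S.
  pose proof (H (Z.of_nat (S N))); pose proof (H (- Z.of_nat (S N))%Z); lra. Qed.

Lemma symsum_abs (f : Z -> R) N : Rabs (symsum f N) <= symsum (fun z => Rabs (f z)) N.
Proof. induction N. rewrite !symsum_0; lra. rewrite !symsum_S.
  eapply Rle_trans. apply Rabs_triang. eapply Rle_trans.
  apply Rplus_le_compat_r. apply Rabs_triang. lra. Qed.

Lemma symsum_term (f : Z -> R) N z : (forall z, 0 <= f z) -> inr N z -> f z <= symsum f N.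
Proof.
  intros H. induction N; intros Hz.
  - rewrite symsum_0. unfold inr in Hz. replace z with 0%Z by lia. lra.
  - rewrite symsum_S. pose proof (symsum_nonneg f N H).
    pose proof (H (Z.of_nat (S N))); pose proof (H (- Z.of_nat (S N))%Z).
    destruct (inr_S _ _ Hz) as [h|[h|h]].
    + pose proof (IHN h). lra.
    + subst. lra.
    + subst. lra.
Qed.

Lemma symsum_growing (f : Z -> R) : (forall z, 0 <= f z) -> Un_growing (symsum f).
Proof. intros H n. rewrite symsum_S.
  pose proof (H (Z.of_nat (S n))); pose proof (H (- Z.of_nat (S n))%Z); lra. Qed.

Lemma symsum_tele1 (H : Z -> R) N :
  symsum (fun z => H z - H (z - 1)%Z) N = H (Z.of_nat N) - H (- Z.of_nat N - 1)%Z.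
Proof.
  induction N.
  - rewrite symsum_0. simpl. reflexivity.
  - rewrite symsum_S, IHN.
    replace (Z.of_nat (S N) - 1)%Z with (Z.of_nat N) by lia.
    replace (- Z.of_nat (S N) - 1)%Z with (- Z.of_nat (S N) - 1)%Z by lia.
    replace (- Z.of_nat N - 1)%Z with (- Z.of_nat (S N))%Z by lia. ring.
Qed.

Lemma symsum_tele2 (G : Z -> R) N :
  symsum (fun z => G z - G (z + 1)%Z) N = G (- Z.of_nat N)%Z - G (Z.of_nat N + 1)%Z.
Proof.
  induction N.
  - rewrite symsum_0. simpl. reflexivity.
  - rewrite symsum_S, IHN.
    replace (- Z.of_nat (S N) + 1)%Z with (- Z.of_nat N)%Z by lia.
    replace (Z.of_nat N + 1)%Z with (Z.of_nat (S N)) by lia. ring.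
Qed.

Lemma symsum_zero (f : Z -> R) N : (forall z, inr N z -> f z = 0) -> symsum f N = 0.
Proof. intros H. rewrite (symsum_ext f (fun _ => 0)) by auto. clear H.
  induction N. rewrite symsum_0; auto. rewrite symsum_S, IHN; ring. Qed.

Lemma symsum_single (f : Z -> R) y N :
  inr N y -> (forall z, z <> y -> f z = 0) -> symsum f N = f y.
Proof.
  intros Hy H. induction N.
  - rewrite symsum_0. unfold inr in Hy. f_equal. lia.
  - rewrite symsum_S. destruct (inr_S _ _ Hy) as [h|[h|h]].
    + rewrite IHN by auto. rewrite (H (Z.of_nat (S N))), (H (- Z.of_nat (S N))%Z) by (unfold inr in h; lia). ring.
    + subst. rewrite symsum_zero. rewrite (H (- _)%Z) by lia. ring.
      intros z Hz; apply H; unfold inr in Hz; lia.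
    + subst. rewrite symsum_zero. rewrite (H (Z.of_nat _)) by lia. ring.
      intros z Hz; apply H; unfold inr in Hz; lia.
Qed.

Lemma symsum_deriv (F F' : Z -> R -> R) t N :
  (forall z, derivable_pt_lim (F z) t (F' z t)) ->
  derivable_pt_lim (fun u => symsum (fun z => F z u) N) t (symsum (fun z => F' z t) N).
Proof.
  intros H. induction N.
  - rewrite symsum_0. apply derivable_pt_lim_ext with (f := F 0%Z).
    intros; rewrite symsum_0; auto. auto.
  - rewrite symsum_S.
    apply derivable_pt_lim_ext with
      (f := plus_fct (plus_fct (fun u => symsum (fun z => F z u) N) (F (Z.of_nat (S N)))) (F (- Z.of_nat (S N))%Z)).
    intros; rewrite symsum_S; unfold plus_fct; auto.
    apply derivable_pt_lim_plus. apply derivable_pt_lim_plus. auto. auto. auto.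
Qed.

Definition rc0 (f : R -> R) := forall eps, 0 < eps -> exists delta, 0 < delta /\
   forall t, 0 <= t < delta -> Rabs (f t - f 0) < eps.

Lemma rc0_plus f g : rc0 f -> rc0 g -> rc0 (fun t => f t + g t).
Proof.
  intros Hf Hg eps He. destruct (Hf (eps/2)) as [d1 [Hd1 H1]]; [lra|].
  destruct (Hg (eps/2)) as [d2 [Hd2 H2]]; [lra|].
  exists (Rmin d1 d2). split. apply Rmin_pos; auto.
  intros t Ht. pose proof (Rmin_l d1 d2); pose proof (Rmin_r d1 d2).
  specialize (H1 t ltac:(lra)); specialize (H2 t ltac:(lra)).
  replace (f t + g t - (f 0 + g 0)) with ((f t - f 0) + (g t - g 0)) by ring.
  eapply Rle_lt_trans. apply Rabs_triang. lra.
Qed.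

Lemma rc0_const c : rc0 (fun _ => c).
Proof. intros eps He. exists 1. split. lra. intros. replace (c - c) with 0 by ring.
  rewrite Rabs_R0; auto. Qed.

Lemma rc0_opp f : rc0 f -> rc0 (fun t => - f t).
Proof. intros Hf eps He. destruct (Hf eps He) as [d [Hd H]]. exists d; split; auto.
  intros t Ht. replace (- f t - - f 0) with (- (f t - f 0)) by ring. rewrite Rabs_Ropp; auto. Qed.

Lemma rc0_mult f g : rc0 f -> rc0 g -> rc0 (fun t => f t * g t).
Proof.
  intros Hf Hg eps He.
  set (K := Rabs (f 0) + Rabs (g 0) + 1).
  assert (HK : 1 <= K) by (unfold K; pose proof (Rabs_pos (f 0)); pose proof (Rabs_pos (g 0)); lra).
  set (e := Rmin 1 (eps / (4 * K))).
  assert (He0 : 0 < e). { unfold e. apply Rmin_pos. lra. apply Rdiv_lt_0_compat; lra. }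
  destruct (Hf e He0) as [d1 [Hd1 H1]]. destruct (Hg e He0) as [d2 [Hd2 H2]].
  exists (Rmin d1 d2). split. apply Rmin_pos; auto.
  intros t Ht. pose proof (Rmin_l d1 d2); pose proof (Rmin_r d1 d2).
  specialize (H1 t ltac:(lra)); specialize (H2 t ltac:(lra)).
  replace (f t * g t - f 0 * g 0) with ((f t - f 0) * g t + f 0 * (g t - g 0)) by ring.
  assert (Hgt : Rabs (g t) <= K).
  { replace (g t) with (g 0 + (g t - g 0)) by ring. eapply Rle_trans. apply Rabs_triang.
    unfold K. pose proof (Rmin_l 1 (eps / (4*K))). fold e in H3. pose proof (Rabs_pos (f 0)). lra. }
  assert (Hee : e * K <= eps / 4).
  { unfold e. pose proof (Rmin_r 1 (eps / (4*K))).
    apply Rle_trans with (eps / (4 * K) * K). apply Rmult_le_compat_r; lra.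
    right. field. lra. }
  eapply Rle_lt_trans. apply Rabs_triang. rewrite !Rabs_mult.
  assert (Rabs (f t - f 0) * Rabs (g t) <= e * K).
  { apply Rmult_le_compat; try apply Rabs_pos; lra. }
  assert (Rabs (f 0) * Rabs (g t - g 0) <= K * e).
  { apply Rmult_le_compat; try apply Rabs_pos; unfold K; pose proof (Rabs_pos (g 0)); lra. }
  assert (e * K > 0) by (apply Rmult_lt_0_compat; lra).
  lra.
Qed.

Lemma rc0_symsum (F : Z -> R -> R) N : (forall z, rc0 (F z)) -> rc0 (fun t => symsum (fun z => F z t) N).
Proof.
  intros H. induction N.
  - intros eps He. destruct (H 0%Z eps He) as [d [Hd Hd']]. exists d; split; [auto|].
    intros; rewrite !symsum_0; auto.
  - intros eps He.
    assert (rc0 (fun t => symsum (fun z => F z t) N + F (Z.of_nat (S N)) t + F (- Z.of_nat (S N))%Z t)).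
    { apply rc0_plus. apply rc0_plus. auto. apply H. apply H. }
    destruct (H0 eps He) as [d [Hd Hd']]. exists d; split; [auto|].
    intros; rewrite !symsum_S; auto.
Qed.

Lemma rc0_bound f X B t : rc0 f -> 0 < t -> (forall e, 0 < e < t -> Rabs (X - f e) <= B) ->
  Rabs (X - f 0) <= B.
Proof.
  intros Hf Ht H. apply Rnot_lt_le. intros Hc.
  set (eps := Rabs (X - f 0) - B).
  destruct (Hf eps ltac:(unfold eps; lra)) as [d [Hd Hd']].
  set (e := Rmin (d/2) (t/2)).
  assert (0 < e) by (unfold e; apply Rmin_pos; lra).
  assert (e <= d/2) by apply Rmin_l. assert (e <= t/2) by apply Rmin_r.
  specialize (Hd' e ltac:(lra)). specialize (H e ltac:(lra)).
  assert (Rabs (X - f 0) <= Rabs (X - f e) + Rabs (f e - f 0)).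
  { replace (X - f 0) with ((X - f e) + (f e - f 0)) by ring. apply Rabs_triang. }
  unfold eps in Hd'. lra.
Qed.

Lemma cv_ge (u : nat -> R) l c N0 : Un_cv u l -> (forall N, (N0 <= N)%nat -> c <= u N) -> c <= l.
Proof.
  intros Hu H. apply Rnot_lt_le. intros Hc.
  destruct (Hu (c - l) ltac:(lra)) as [N HN].
  specialize (HN (max N N0) ltac:(lia)). specialize (H (max N N0) ltac:(lia)).
  unfold Rdist in HN. apply Rabs_def2 in HN. lra.
Qed.

Lemma cv_le (u : nat -> R) l c N0 : Un_cv u l -> (forall N, (N0 <= N)%nat -> u N <= c) -> l <= c.
Proof.
  intros Hu H. apply Rnot_lt_le. intros Hc.
  destruct (Hu (l - c) ltac:(lra)) as [N HN].
  specialize (HN (max N N0) ltac:(lia)). specialize (H (max N N0) ltac:(lia)).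
  unfold Rdist in HN. apply Rabs_def2 in HN. lra.
Qed.

Lemma symsum_term_lim (f : Z -> R) l z : (forall z, 0 <= f z) -> Un_cv (symsum f) l -> f z <= l.
Proof.
  intros H Hl. apply cv_ge with (u := symsum f) (N0 := Z.abs_nat z); auto.
  intros N HN. apply symsum_term; auto. unfold inr. lia.
Qed.

Lemma symsum_diff_le (g h : Z -> R) N M : (forall z, Rabs (g z) <= h z) -> (N <= M)%nat ->
  Rabs (symsum g M - symsum g N) <= symsum h M - symsum h N.
Proof.
  intros H HNM. induction HNM.
  - replace (symsum g N - symsum g N) with 0 by ring. rewrite Rabs_R0. lra.
  - rewrite !symsum_S.
    replace (symsum g m + g (Z.of_nat (S m)) + g (- Z.of_nat (S m))%Z - symsum g N)
      with ((symsum g m - symsum g N) + g (Z.of_nat (S m)) + g (- Z.of_nat (S m))%Z) by ring.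
    eapply Rle_trans. apply Rabs_triang. eapply Rle_trans. apply Rplus_le_compat_r. apply Rabs_triang.
    pose proof (H (Z.of_nat (S m))); pose proof (H (- Z.of_nat (S m))%Z). lra.
Qed.

Lemma tail_bound (g h : Z -> R) lg lh N : (forall z, Rabs (g z) <= h z) ->
  Un_cv (symsum g) lg -> Un_cv (symsum h) lh -> Rabs (lg - symsum g N) <= lh - symsum h N.
Proof.
  intros H Hg Hh.
  assert (Un_cv (fun M => Rabs (symsum g M - symsum g N)) (Rabs (lg - symsum g N))).
  { intros eps He. destruct (Hg eps He) as [K HK]. exists K. intros n Hn.
    specialize (HK n Hn). unfold Rdist in *.
    eapply Rle_lt_trans. apply Rabs_triang_inv2.
    replace (symsum g n - symsum g N - (lg - symsum g N)) with (symsum g n - lg) by ring. auto. }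
  assert (Un_cv (fun M => symsum h M - symsum h N) (lh - symsum h N)).
  { intros eps He. destruct (Hh eps He) as [K HK]. exists K. intros n Hn.
    specialize (HK n Hn). unfold Rdist in *.
    replace (symsum h n - symsum h N - (lh - symsum h N)) with (symsum h n - lh) by ring. auto. }
  apply Rle_cv_lim with (Un := fun M => Rabs (symsum g (M + N) - symsum g N))
                        (Vn := fun M => symsum h (M + N) - symsum h N).
  - intros n. apply symsum_diff_le; auto. lia.
  - intros eps He. destruct (H0 eps He) as [K HK]. exists K. intros n Hn. apply HK. lia.
  - intros eps He. destruct (H1 eps He) as [K HK]. exists K. intros n Hn. apply HK. lia.
Qed.

Lemma bounded_cv (h : Z -> R) M : (forall z, 0 <= h z) -> (forall N, symsum h N <= M) ->
  exists l, Un_cv (symsum h) l.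
Proof.
  intros H0 HM. destruct (growing_cv (symsum h)) as [l Hl].
  apply symsum_growing; auto. exists M. intros x [n Hn]. subst. auto. exists l; auto.
Qed.

Lemma exists_sum (g h : Z -> R) M : (forall z, Rabs (g z) <= h z) -> (forall N, symsum h N <= M) ->
  exists l, Zhas_sum g l.
Proof.
  intros H HM.
  assert (H0 : forall z, 0 <= h z) by (intros z; pose proof (H z); pose proof (Rabs_pos (g z)); lra).
  destruct (bounded_cv h M H0 HM) as [lh Hlh].
  assert (Cauchy_crit (symsum g)).
  { pose proof (CV_Cauchy (symsum h) (exist _ lh Hlh)) as Hc.
    intros eps He. destruct (Hc eps He) as [K HK]. exists K. intros n m Hn Hm.
    unfold Rdist in *. destruct (le_ge_dec n m).
    - eapply Rle_lt_trans. rewrite Rabs_minus_sym. apply symsum_diff_le; eauto.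
      specialize (HK m n Hm Hn). eapply Rle_lt_trans; [apply Rle_abs|]. auto.
    - eapply Rle_lt_trans. apply symsum_diff_le; eauto.
      specialize (HK n m Hn Hm). eapply Rle_lt_trans; [apply Rle_abs|]. auto. }
  destruct (R_complete _ H1) as [l Hl]. exists l. split; auto.
  exists M. intros N. eapply Rle_trans; [|apply (HM N)]. apply symsum_le; auto.
Qed.

Definition tlim (f : R -> R) (l : R) := forall eps, 0 < eps -> exists T, forall t, T <= t -> Rabs (f t - l) < eps.

Lemma tlim_plus f g a b : tlim f a -> tlim g b -> tlim (fun t => f t + g t) (a + b).
Proof.
  intros Hf Hg eps He. destruct (Hf (eps/2)) as [T1 H1]; [lra|]. destruct (Hg (eps/2)) as [T2 H2]; [lra|].
  exists (Rmax T1 T2). intros t Ht. pose proof (Rmax_l T1 T2); pose proof (Rmax_r T1 T2).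
  specialize (H1 t ltac:(lra)); specialize (H2 t ltac:(lra)).
  replace (f t + g t - (a + b)) with ((f t - a) + (g t - b)) by ring.
  eapply Rle_lt_trans. apply Rabs_triang. lra.
Qed.

Lemma tlim_symsum (F : Z -> R -> R) (G : Z -> R) N :
  (forall z, tlim (F z) (G z)) -> tlim (fun t => symsum (fun z => F z t) N) (symsum G N).
Proof.
  intros H. induction N.
  - intros eps He. destruct (H 0%Z eps He) as [T HT]. exists T. intros; rewrite !symsum_0; auto.
  - intros eps He.
    destruct (tlim_plus _ _ _ _ (tlim_plus _ _ _ _ IHN (H (Z.of_nat (S N)))) (H (- Z.of_nat (S N))%Z) eps He)
      as [T HT].
    exists T. intros t Ht. rewrite !symsum_S. apply HT; auto.
Qed.

Lemma dct (F : R -> Z -> R) (G h : Z -> R) M T0 lG :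
  (forall z, 0 <= h z) -> (forall N, symsum h N <= M) ->
  (forall t z, T0 <= t -> Rabs (F t z) <= h z) ->
  (forall z, tlim (fun t => F t z) (G z)) ->
  Un_cv (symsum G) lG ->
  forall eps, 0 < eps -> exists T, forall t e, T <= t -> Un_cv (symsum (F t)) e -> Rabs (e - lG) < eps.
Proof.
  intros Hh0 HM Hdom Hlim HG eps He.
  destruct (bounded_cv h M Hh0 HM) as [lh Hlh].
  assert (HGd : forall z, Rabs (G z) <= h z).
  { intros z. apply Rnot_lt_le. intros Hc. destruct (Hlim z (Rabs (G z) - h z) ltac:(lra)) as [T HT].
    specialize (HT (Rmax T T0) (Rmax_l _ _)). specialize (Hdom (Rmax T T0) z (Rmax_r _ _)).
    pose proof (Rabs_triang_inv (G z) (F (Rmax T T0) z)). rewrite Rabs_minus_sym in HT. lra. }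
  destruct (Hlh (eps/3) ltac:(lra)) as [N HN]. specialize (HN N (le_n _)). unfold Rdist in HN.
  assert (Htail : lh - symsum h N < eps / 3).
  { apply Rabs_def2 in HN. lra. }
  destruct (tlim_symsum (fun z t => F t z) G N Hlim (eps/3) ltac:(lra)) as [T1 HT1].
  exists (Rmax T1 T0). intros t e Ht He'.
  pose proof (Rmax_l T1 T0); pose proof (Rmax_r T1 T0).
  pose proof (tail_bound (F t) h e lh N (fun z => Hdom t z ltac:(lra)) He' Hlh).
  pose proof (tail_bound G h lG lh N HGd HG Hlh).
  specialize (HT1 t ltac:(lra)). simpl in HT1.
  assert (Rabs (symsum (F t) N - symsum G N) < eps/3) by exact HT1.
  replace (e - lG) with ((e - symsum (F t) N) + (symsum (F t) N - symsum G N) - (lG - symsum G N)) by ring.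
  eapply Rle_lt_trans. apply Rabs_triang. rewrite Rabs_Ropp.
  eapply Rle_lt_trans. apply Rplus_le_compat_r. apply Rabs_triang. lra.
Qed.

Lemma rc0_ge f X t : rc0 f -> 0 < t -> (forall e, 0 < e < t -> X <= f e) -> X <= f 0.
Proof.
  intros Hf Ht H. apply Rnot_lt_le. intros Hc.
  destruct (Hf (X - f 0) ltac:(lra)) as [d [Hd Hd']].
  set (e := Rmin (d/2) (t/2)).
  assert (0 < e) by (unfold e; apply Rmin_pos; lra).
  assert (e <= d/2) by apply Rmin_l. assert (e <= t/2) by apply Rmin_r.
  specialize (Hd' e ltac:(lra)). specialize (H e ltac:(lra)).
  apply Rabs_def2 in Hd'. lra.
Qed.

Lemma mvt_abs (f f' : R -> R) t B : 0 < t -> rc0 f ->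
  (forall c, 0 < c -> derivable_pt_lim f c (f' c)) ->
  (forall c, 0 < c <= t -> Rabs (f' c) <= B) -> Rabs (f t - f 0) <= B * t.
Proof.
  intros Ht Hf Hd HB. apply rc0_bound with t; auto.
  intros e He. destruct (MVT_cor2 f f' e t ltac:(lra)) as [c [Hc Hc']].
  { intros c Hc. apply Hd. lra. }
  rewrite Hc. rewrite Rabs_mult. rewrite (Rabs_right (t - e)) by lra.
  specialize (HB c ltac:(lra)). pose proof (Rabs_pos (f' c)).
  apply Rle_trans with (B * (t - e)). apply Rmult_le_compat_r; lra. nra.
Qed.

Lemma mvt_le (f f' : R -> R) t B : 0 < t -> rc0 f -> 0 <= B ->
  (forall c, 0 < c -> derivable_pt_lim f c (f' c)) ->
  (forall c, 0 < c <= t -> f' c <= B) -> f t - f 0 <= B * t.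
Proof.
  intros Ht Hf HB0 Hd HB.
  assert (f t - B * t <= f 0). 2: lra.
  apply rc0_ge with t; auto.
  intros e He. destruct (MVT_cor2 f f' e t ltac:(lra)) as [c [Hc Hc']].
  { intros c Hc. apply Hd. lra. }
  specialize (HB c ltac:(lra)).
  assert (f' c * (t - e) <= B * t) by nra. lra.
Qed.

Lemma exp_small x : 0 <= x <= 1/2 -> exp x - 1 <= 2 * x.
Proof.
  intros Hx. pose proof (exp_ineq1_le (-x)).
  assert (exp x * exp (- x) = 1) by (rewrite <- exp_plus; replace (x + - x) with 0 by ring; apply exp_0).
  pose proof (exp_pos x). nra.
Qed.

Lemma rc0_exp c : rc0 (fun t => exp (c * t)).
Proof.
  intros eps He.
  set (k := Rabs c + 1).
  assert (Hk : 1 <= k) by (unfold k; pose proof (Rabs_pos c); lra).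
  exists (Rmin (1/(2*k)) (eps / (4 * k))). split.
  { apply Rmin_pos; apply Rdiv_lt_0_compat; lra. }
  intros t Ht. pose proof (Rmin_l (1/(2*k)) (eps / (4 * k))). pose proof (Rmin_r (1/(2*k)) (eps / (4 * k))).
  replace (c * 0) with 0 by ring. rewrite exp_0.
  assert (Hct : Rabs (c * t) <= k * t).
  { rewrite Rabs_mult, (Rabs_right t) by lra. unfold k. nra. }
  assert (Hkt1 : k * t <= 1/2).
  { apply Rle_trans with (k * (1/(2*k))). apply Rmult_le_compat_l; lra. right; field; lra. }
  assert (Hkt2 : k * t <= eps/4).
  { apply Rle_trans with (k * (eps/(4*k))). apply Rmult_le_compat_l; lra. right; field; lra. }
  destruct (Rle_dec 0 (c * t)).
  - rewrite Rabs_right in Hct by lra. pose proof (exp_small (c*t) ltac:(lra)).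
    pose proof (exp_ineq1_le (c * t)). rewrite Rabs_right by lra. lra.
  - rewrite Rabs_left in Hct by lra. pose proof (exp_ineq1_le (c * t)).
    assert (exp (c * t) <= 1). { rewrite <- exp_0. apply Rlt_le, exp_increasing. lra. }
    rewrite Rabs_left1 by lra. lra.
Qed.

Lemma exp_decay K c : 0 < c -> 0 <= K -> forall eps, 0 < eps ->
  exists T, forall t, T <= t -> exp (- (c * t)) * K < eps.
Proof.
  intros Hc HK eps He. exists (K / (c * eps) + 1). intros t Ht.
  assert (0 <= K / (c * eps)) by (apply Rmult_le_pos; [lra| apply Rlt_le, Rinv_0_lt_compat, Rmult_lt_0_compat; lra]).
  pose proof (exp_ineq1_le (c * t)).
  assert (exp (c * t) * exp (- (c*t)) = 1) by (rewrite <- exp_plus; replace (c*t + - (c*t)) with 0 by ring; apply exp_0).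
  pose proof (exp_pos (- (c*t))).
  assert (K < eps * (c * t)).
  { assert (K = c * eps * (K / (c * eps))) by (field; lra).
    assert (0 < c * eps) by (apply Rmult_lt_0_compat; lra). nra. }
  assert (K < eps * exp (c * t)) by nra.
  apply Rlt_le_trans with (exp (- (c * t)) * (eps * exp (c * t))).
  apply Rmult_lt_compat_l; auto. right. transitivity (eps * (exp (c * t) * exp (- (c * t)))). ring.
  rewrite H1; ring.
Qed.

Lemma tlim_scal c f l : tlim f l -> tlim (fun t => c * f t) (c * l).
Proof.
  intros H eps He. destruct (H (eps / (Rabs c + 1))) as [T HT].
  { apply Rdiv_lt_0_compat; [lra|]. pose proof (Rabs_pos c); lra. }
  exists T. intros t Ht. specialize (HT t Ht).
  replace (c * f t - c * l) with (c * (f t - l)) by ring. rewrite Rabs_mult.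
  pose proof (Rabs_pos c). pose proof (Rabs_pos (f t - l)).
  apply Rle_lt_trans with ((Rabs c + 1) * Rabs (f t - l)). nra.
  replace eps with ((Rabs c + 1) * (eps / (Rabs c + 1))) by (field; lra).
  apply Rmult_lt_compat_l; lra.
Qed.

Lemma cv_const c : Un_cv (fun _ => c) c.
Proof. intros eps He. exists 0%nat. intros. unfold Rdist. replace (c - c) with 0 by ring. rewrite Rabs_R0; auto. Qed.

Lemma exp_lin_deriv c t : derivable_pt_lim (fun t => exp (c * t)) t (exp (c * t) * c).
Proof.
  apply derivable_pt_lim_ext with (f := comp exp (fun t => c * t)). intros; reflexivity.
  apply derivable_pt_lim_comp with (f1 := fun t => c * t) (l1 := c) (l2 := exp (c * t)).
  - apply derivable_pt_lim_ext with (f := mult_real_fct c id). intros; reflexivity.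
    replace c with (c * 1) at 2 by ring. apply derivable_pt_lim_scal, derivable_pt_lim_id.
  - apply derivable_pt_lim_exp.
Qed.

Lemma tlim_ext f g l : (forall t, f t = g t) -> tlim f l -> tlim g l.
Proof. intros H Hf eps He. destruct (Hf eps He) as [T HT]. exists T. intros t Ht. rewrite <- H. auto. Qed.

Lemma cv_ext (u u' : nat -> R) l : (forall n, u n = u' n) -> Un_cv u l -> Un_cv u' l.
Proof. intros H Hu eps He. destruct (Hu eps He) as [N HN]. exists N. intros n Hn. rewrite <- H. auto. Qed.

Section Core.
Variables (lam mu w : Z -> R) (v : R -> Z -> R) (y : Z) (m Ssum Ma Mw : R).
Hypothesis Hw : forall z, 0 < w z.
Hypothesis Hlam : forall z, 0 <= lam z.
Hypothesis Hlampos : forall z, 0 < lam z.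
Hypothesis Hmu : forall z, 0 <= mu z.
Hypothesis Hdb : forall z, w z * lam z = w (z+1)%Z * mu (z+1)%Z.
Hypothesis Hm : 0 < m.
Hypothesis Hkap : forall z, m <= lam z - lam (z+1)%Z + mu (z+1)%Z - mu z.
Hypothesis Hv01 : forall t z, 0 <= t -> 0 <= v t z <= 1.
Hypothesis Hv0 : forall z, v 0 z = if Z.eq_dec z y then 1 else 0.
Hypothesis Hvc : forall z, rc0 (fun t => v t z).
Definition Lv t z := lam z * v t (z+1)%Z + mu z * v t (z-1)%Z - (lam z + mu z) * v t z.
Hypothesis Hvd : forall t z, 0 < t -> derivable_pt_lim (fun u => v u z) t (Lv t z).
Definition a z := w z * lam z.
Hypothesis Hb1 : Un_cv (fun N => a (Z.of_nat N) + a (- Z.of_nat N - 1)%Z) 0.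
Hypothesis Hb2 : Un_cv (fun N => a (Z.of_nat N) * lam (Z.of_nat N + 1)%Z + a (- Z.of_nat N)%Z * mu (- Z.of_nat N)%Z) 0.
Hypothesis Ha : forall N, symsum a N <= Ma.
Hypothesis HwS : Un_cv (symsum w) Ssum.
Hypothesis HwM : forall N, symsum w N <= Mw.

Lemma a_nonneg z : 0 <= a z.
Proof. unfold a. pose proof (Hw z); pose proof (Hlam z). nra. Qed.

Lemma db' z : a (z - 1)%Z = w z * mu z.
Proof. unfold a. rewrite Hdb. f_equal; f_equal; ring. Qed.

Lemma stat_sum t : 0 <= t -> Un_cv (symsum (fun z => w z * v t z)) (w y).
Proof.
  intros Ht.
  assert (H0 : forall N, inr N y -> symsum (fun z => w z * v 0 z) N = w y).
  { intros N HN. rewrite (symsum_single _ y); auto.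
    rewrite Hv0. destruct Z.eq_dec; [ring|lia].
    intros z Hz. rewrite Hv0. destruct Z.eq_dec; [lia|ring]. }
  assert (H1 : forall N, 0 < t -> Rabs (symsum (fun z => w z * v t z) N - symsum (fun z => w z * v 0 z) N)
                 <= (a (Z.of_nat N) + a (- Z.of_nat N - 1)%Z) * t).
  { intros N Htp.
    apply (mvt_abs (fun u => symsum (fun z => w z * v u z) N)
            (fun c => symsum (fun z => w z * Lv c z) N)); auto.
    - apply rc0_symsum. intros z. apply rc0_mult. apply rc0_const. apply Hvc.
    - intros c Hc. apply (symsum_deriv (fun z u => w z * v u z) (fun z c => w z * Lv c z)).
      intros z. apply derivable_pt_lim_ext with (f := mult_real_fct (w z) (fun u => v u z)).
      intros; reflexivity. apply derivable_pt_lim_scal. auto.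
    - intros c Hc.
      set (H := fun z => a z * (v c (z+1)%Z - v c z)).
      rewrite (symsum_ext _ (fun z => H z - H (z - 1)%Z)).
      + rewrite symsum_tele1. unfold H.
        pose proof (a_nonneg (Z.of_nat N)). pose proof (a_nonneg (- Z.of_nat N - 1)%Z).
        assert (Hb : forall z, Rabs (a z * (v c (z+1)%Z - v c z)) <= a z).
        { intros z. rewrite Rabs_mult, Rabs_right by (apply Rle_ge, a_nonneg).
          pose proof (Hv01 c (z+1)%Z ltac:(lra)); pose proof (Hv01 c z ltac:(lra)).
          pose proof (a_nonneg z).
          assert (Rabs (v c (z + 1)%Z - v c z) <= 1) by (apply Rabs_le; lra). nra. }
        eapply Rle_trans. apply Rabs_triang. rewrite Rabs_Ropp.
        pose proof (Hb (Z.of_nat N)) as Hb1'. pose proof (Hb (- Z.of_nat N - 1)%Z) as Hb2'. lra.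
      + intros z _. unfold H, Lv. replace (z - 1 + 1)%Z with z by ring. rewrite db'. unfold a. ring. }
  intros eps He.
  destruct (Hb1 (eps / (t + 1))) as [K HK].
  { apply Rdiv_lt_0_compat; lra. }
  exists (max K (Z.abs_nat y)). intros N HN. unfold Rdist.
  rewrite <- (H0 N) by (unfold inr; lia).
  destruct (Req_dec t 0) as [Ht0|Ht0].
  - subst. replace (_ - _) with 0 by ring. rewrite Rabs_R0; auto.
  - eapply Rle_lt_trans. apply H1. lra.
    specialize (HK N ltac:(lia)). unfold Rdist in HK. rewrite Rminus_0_r in HK.
    apply Rabs_def2 in HK.
    pose proof (a_nonneg (Z.of_nat N)). pose proof (a_nonneg (- Z.of_nat N - 1)%Z).
    apply Rle_lt_trans with ((eps / (t+1)) * t). apply Rmult_le_compat_r; lra.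
    apply Rlt_le_trans with ((eps / (t+1)) * (t + 1)).
    apply Rmult_lt_compat_l. apply Rdiv_lt_0_compat; lra. lra. right; field; lra.
Qed.


Definition D t z := v t (z+1)%Z - v t z.
Definition E N t := symsum (fun z => a z * (D t z * D t z)) N.
Definition D' t z := Lv t (z+1)%Z - Lv t z.

Lemma D_bound t z : 0 <= t -> Rabs (D t z) <= 1.
Proof. intros Ht. unfold D. pose proof (Hv01 t (z+1)%Z Ht); pose proof (Hv01 t z Ht).
  apply Rabs_le; lra. Qed.

Lemma D2_bound t z : 0 <= t -> 0 <= D t z * D t z <= 1.
Proof. intros Ht. unfold D. pose proof (Hv01 t (z+1)%Z Ht); pose proof (Hv01 t z Ht).
  set (d := v t (z + 1)%Z - v t z). assert (-1 <= d <= 1) by (unfold d; lra).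
  split. nra. assert (0 <= (1 - d) * (1 + d)) by (apply Rmult_le_pos; lra). nra. Qed.

Lemma D_deriv t z : 0 < t -> derivable_pt_lim (fun u => D u z) t (D' t z).
Proof.
  intros Ht. unfold D, D'.
  apply derivable_pt_lim_ext with (f := minus_fct (fun u => v u (z+1)%Z) (fun u => v u z)).
  intros; reflexivity. apply derivable_pt_lim_minus; auto.
Qed.

Lemma E_deriv N t : 0 < t -> derivable_pt_lim (E N) t (symsum (fun z => a z * (2 * D t z * D' t z)) N).
Proof.
  intros Ht. unfold E.
  apply (symsum_deriv (fun z u => a z * (D u z * D u z)) (fun z t => a z * (2 * D t z * D' t z))).
  intros z.
  assert (H : derivable_pt_lim (mult_real_fct (a z) (mult_fct (fun u => D u z) (fun u => D u z))) t
               (a z * (D' t z * D t z + D t z * D' t z))).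
  { apply derivable_pt_lim_scal. apply derivable_pt_lim_mult; apply D_deriv; auto. }
  replace (a z * (2 * D t z * D' t z)) with (a z * (D' t z * D t z + D t z * D' t z)) by ring.
  eapply derivable_pt_lim_ext; [|exact H]. intros; reflexivity.
Qed.

Definition Fb t z := a z * lam (z+1)%Z * (D t (z+1)%Z * D t (z+1)%Z).
Definition Gb t z := a z * mu z * (D t (z-1)%Z * D t (z-1)%Z).

Lemma point_ineq t z : a z * (2 * D t z * D' t z) <=
   -2 * m * (a z * (D t z * D t z)) + (Fb t z - Fb t (z-1)%Z) + (Gb t z - Gb t (z+1)%Z).
Proof.
  assert (E1 : a (z - 1)%Z * lam z = a z * mu z) by (rewrite db'; unfold a; ring).
  assert (E2 : a (z + 1)%Z * mu (z+1)%Z = a z * lam (z+1)%Z).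
  { unfold a. rewrite (Hdb z). ring. }
  unfold Fb, Gb, D', Lv, D.
  replace (z - 1 + 1)%Z with z by ring. replace (z + 1 - 1)%Z with z by ring.
  set (v0 := v t z). set (v1 := v t (z+1)%Z). set (v2 := v t (z+1+1)%Z). set (vm := v t (z-1)%Z).
  rewrite E1, E2.
  pose proof (a_nonneg z). pose proof (Hlam (z+1)%Z). pose proof (Hmu z). pose proof (Hkap z).
  assert (0 <= a z * lam (z+1)%Z * (((v1 - v0) - (v2 - v1)) * ((v1 - v0) - (v2 - v1)))).
  { apply Rmult_le_pos; [apply Rmult_le_pos; lra | apply Rle_0_sqr]. }
  assert (0 <= a z * mu z * (((v1 - v0) - (v0 - vm)) * ((v1 - v0) - (v0 - vm)))).
  { apply Rmult_le_pos; [apply Rmult_le_pos; lra | apply Rle_0_sqr]. }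
  assert (0 <= a z * (lam z - lam (z+1)%Z + mu (z+1)%Z - mu z - m) * ((v1 - v0) * (v1 - v0))).
  { apply Rmult_le_pos; [apply Rmult_le_pos; lra | apply Rle_0_sqr]. }
  nra.
Qed.

Definition bN N := a (Z.of_nat N) * lam (Z.of_nat N + 1)%Z + a (- Z.of_nat N)%Z * mu (- Z.of_nat N)%Z.

Lemma E_ineq N t : 0 < t ->
  symsum (fun z => a z * (2 * D t z * D' t z)) N <= -2 * m * E N t + bN N.
Proof.
  intros Ht. eapply Rle_trans. apply symsum_le. intros z. apply point_ineq.
  rewrite !symsum_plus, symsum_tele1, symsum_tele2.
  unfold E. rewrite <- symsum_scal.
  replace (symsum (fun z => -2 * m * (a z * (D t z * D t z))) N) with
          (symsum (fun z => -2 * m * (a z * (D t z * D t z))) N) by reflexivity.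
  unfold bN, Fb, Gb.
  replace (- Z.of_nat N - 1 + 1)%Z with (- Z.of_nat N)%Z by ring.
  replace (- Z.of_nat N - 1)%Z with (- Z.of_nat N - 1)%Z by ring.
  replace (Z.of_nat N + 1 - 1)%Z with (Z.of_nat N) by ring.
  pose proof (D2_bound t (Z.of_nat N + 1)%Z ltac:(lra)).
  pose proof (D2_bound t (- Z.of_nat N - 1)%Z ltac:(lra)).
  pose proof (D2_bound t (- Z.of_nat N)%Z ltac:(lra)).
  pose proof (D2_bound t (Z.of_nat N)%Z ltac:(lra)).
  pose proof (a_nonneg (Z.of_nat N)). pose proof (a_nonneg (- Z.of_nat N)%Z).
  pose proof (a_nonneg (- Z.of_nat N - 1)%Z). pose proof (a_nonneg (Z.of_nat N + 1)%Z).
  pose proof (Hlam (Z.of_nat N + 1)%Z). pose proof (Hlam (- Z.of_nat N)%Z).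
  pose proof (Hmu (- Z.of_nat N)%Z). pose proof (Hmu (Z.of_nat N + 1)%Z).
  assert (0 <= a (- Z.of_nat N - 1)%Z * lam (- Z.of_nat N)%Z) by nra.
  assert (0 <= a (Z.of_nat N + 1)%Z * mu (Z.of_nat N + 1)%Z) by nra.
  assert (a (Z.of_nat N) * lam (Z.of_nat N + 1)%Z * (D t (Z.of_nat N + 1)%Z * D t (Z.of_nat N + 1)%Z)
          <= a (Z.of_nat N) * lam (Z.of_nat N + 1)%Z).
  { assert (0 <= a (Z.of_nat N) * lam (Z.of_nat N + 1)%Z) by nra. nra. }
  assert (a (- Z.of_nat N)%Z * mu (- Z.of_nat N)%Z * (D t (- Z.of_nat N - 1)%Z * D t (- Z.of_nat N - 1)%Z)
          <= a (- Z.of_nat N)%Z * mu (- Z.of_nat N)%Z).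
  { assert (0 <= a (- Z.of_nat N)%Z * mu (- Z.of_nat N)%Z) by nra. nra. }
  assert (0 <= a (- Z.of_nat N - 1)%Z * lam (- Z.of_nat N)%Z * (D t (- Z.of_nat N)%Z * D t (- Z.of_nat N)%Z)) by nra.
  assert (0 <= a (Z.of_nat N + 1)%Z * mu (Z.of_nat N + 1)%Z * (D t (Z.of_nat N)%Z * D t (Z.of_nat N)%Z)) by nra.
  lra.
Qed.

Lemma rc0_D z : rc0 (fun t => D t z).
Proof. unfold D. apply rc0_plus. apply Hvc. apply rc0_opp, Hvc. Qed.

Lemma rc0_E N : rc0 (E N).
Proof. unfold E. apply (rc0_symsum (fun z t => a z * (D t z * D t z))). intros z.
  apply rc0_mult. apply rc0_const. apply rc0_mult; apply rc0_D. Qed.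

Lemma E0_bound N : E N 0 <= Ma.
Proof. eapply Rle_trans; [|apply (Ha N)]. unfold E. apply symsum_le. intros z.
  pose proof (D2_bound 0 z ltac:(lra)). pose proof (a_nonneg z). nra. Qed.

Lemma bN_nonneg N : 0 <= bN N.
Proof. unfold bN. pose proof (a_nonneg (Z.of_nat N)). pose proof (a_nonneg (- Z.of_nat N)%Z).
  pose proof (Hlam (Z.of_nat N + 1)%Z). pose proof (Hmu (- Z.of_nat N)%Z). nra. Qed.

Lemma Phi_bound N t0 : 0 < t0 -> exp (2 * m * t0) * E N t0 - E N 0 <= exp (2 * m * t0) * bN N * t0.
Proof.
  intros Ht0.
  pose (f := fun t => exp (2 * m * t) * E N t).
  pose (f' := fun t => exp (2 * m * t) * (2 * m) * E N t +
                       exp (2 * m * t) * symsum (fun z => a z * (2 * D t z * D' t z)) N).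
  assert (f t0 - f 0 <= exp (2 * m * t0) * bN N * t0).
  2:{ unfold f in H. replace (2 * m * 0) with 0 in H by ring. rewrite exp_0 in H. lra. }
  apply (mvt_le f f'); auto.
  - unfold f. apply rc0_mult. apply rc0_exp. apply rc0_E.
  - pose proof (exp_pos (2 * m * t0)). pose proof (bN_nonneg N). nra.
  - intros c Hc.
    pose proof (derivable_pt_lim_mult _ _ c _ _ (exp_lin_deriv (2*m) c) (E_deriv N c Hc)) as Hd.
    unfold f, f'. eapply derivable_pt_lim_ext; [|exact Hd]. intros; reflexivity.
  - intros c Hc. unfold f'. pose proof (E_ineq N c ltac:(lra)).
    pose proof (exp_pos (2 * m * c)). pose proof (bN_nonneg N).
    assert (exp (2 * m * c) <= exp (2 * m * t0)).
    { destruct (Req_dec c t0). subst; lra. apply Rlt_le, exp_increasing. nra. }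
    assert (exp (2 * m * c) * (2 * m) * E N c + exp (2 * m * c) * symsum (fun z => a z * (2 * D c z * D' c z)) N
            <= exp (2 * m * c) * bN N) by nra.
    nra.
Qed.

Lemma decay z t : 0 < t -> a z * (D t z * D t z) <= exp (- (2 * m * t)) * Ma.
Proof.
  intros Ht.
  assert (Hexp : exp (2 * m * t) * exp (- (2 * m * t)) = 1)
    by (rewrite <- exp_plus; replace (2 * m * t + - (2 * m * t)) with 0 by ring; apply exp_0).
  pose proof (exp_pos (2 * m * t)). pose proof (exp_pos (- (2 * m * t))).
  apply cv_ge with (u := fun N => exp (- (2 * m * t)) * Ma + bN N * t) (N0 := Z.abs_nat z).
  - assert (Hc : Un_cv (fun N => exp (- (2 * m * t)) * Ma + bN N * t) (exp (- (2 * m * t)) * Ma + 0 * t)).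
    { apply CV_plus. apply cv_const. apply CV_mult. exact Hb2. apply cv_const. }
    rewrite Rmult_0_l, Rplus_0_r in Hc. exact Hc.
  - intros N HN.
    assert (a z * (D t z * D t z) <= E N t).
    { unfold E. apply (symsum_term (fun z => a z * (D t z * D t z))).
      intros z'. pose proof (D2_bound t z' ltac:(lra)). pose proof (a_nonneg z'). nra.
      unfold inr; lia. }
    pose proof (Phi_bound N t Ht). pose proof (E0_bound N).
    assert (exp (2 * m * t) * E N t <= exp (2 * m * t) * (exp (- (2 * m * t)) * Ma + bN N * t)).
    { replace (exp (2 * m * t) * (exp (- (2 * m * t)) * Ma + bN N * t)) with
        (Ma + exp (2 * m * t) * bN N * t). lra.
      transitivity ((exp (2 * m * t) * exp (- (2 * m * t))) * Ma + exp (2 * m * t) * bN N * t).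
      rewrite Hexp; ring. ring. }
    apply Rmult_le_reg_l in H4; auto. lra.
Qed.

Lemma Ma_nonneg : 0 <= Ma.
Proof. eapply Rle_trans; [|apply (Ha 0%nat)]. apply symsum_nonneg. apply a_nonneg. Qed.

Lemma a_pos z : 0 < a z.
Proof. unfold a. pose proof (Hw z). pose proof (Hlampos z). nra. Qed.

Lemma D_tlim z : tlim (fun t => D t z) 0.
Proof.
  intros eps He.
  assert (0 <= Ma / a z) by (apply Rmult_le_pos; [apply Ma_nonneg| apply Rlt_le, Rinv_0_lt_compat, a_pos]).
  destruct (exp_decay (Ma / a z) (2 * m) ltac:(lra) H (eps * eps) ltac:(nra)) as [T HT].
  exists (Rmax T 1). intros t Ht. pose proof (Rmax_l T 1); pose proof (Rmax_r T 1).
  specialize (HT t ltac:(lra)). pose proof (decay z t ltac:(lra)). pose proof (a_pos z).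
  rewrite Rminus_0_r.
  assert (D t z * D t z < eps * eps).
  { apply Rle_lt_trans with (exp (- (2 * m * t)) * (Ma / a z)); auto.
    apply Rmult_le_reg_l with (a z); auto.
    replace (a z * (exp (- (2 * m * t)) * (Ma / a z))) with (exp (- (2 * m * t)) * Ma) by (field; lra).
    lra. }
  destruct (Rlt_or_le (Rabs (D t z)) eps) as [Hlt|Hge]; auto.
  exfalso. pose proof (Rabs_pos (D t z)).
  assert (HH : eps * eps <= Rabs (D t z) * Rabs (D t z)) by nra.
  rewrite <- Rabs_mult in HH. rewrite Rabs_right in HH by (apply Rle_ge; nra). lra.
Qed.

Lemma diff_tlim_nat x k : tlim (fun t => v t (x + Z.of_nat k)%Z - v t x) 0.
Proof.
  induction k.
  - intros eps He. exists 0. intros t _. replace (x + Z.of_nat 0)%Z with x by lia.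
    replace (v t x - v t x - 0) with 0 by ring. rewrite Rabs_R0; auto.
  - replace 0 with (0 + 0) by ring.
    apply tlim_ext with (f := fun t => D t (x + Z.of_nat k)%Z + (v t (x + Z.of_nat k)%Z - v t x)).
    + intros t. unfold D. replace (x + Z.of_nat k + 1)%Z with (x + Z.of_nat (S k))%Z by lia. ring.
    + apply tlim_plus. apply D_tlim. auto.
Qed.

Lemma diff_tlim x z : tlim (fun t => v t x - v t z) 0.
Proof.
  destruct (Z_le_gt_dec z x).
  - apply tlim_ext with (f := fun t => v t (z + Z.of_nat (Z.to_nat (x - z)))%Z - v t z).
    intros t. replace (z + Z.of_nat (Z.to_nat (x - z)))%Z with x by lia. reflexivity.
    apply diff_tlim_nat.
  - replace 0 with (-1 * 0) by ring.
    apply tlim_ext with (f := fun t => -1 * (v t (x + Z.of_nat (Z.to_nat (z - x)))%Z - v t x)).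
    intros t. replace (x + Z.of_nat (Z.to_nat (z - x)))%Z with z by lia. ring.
    apply tlim_scal. apply diff_tlim_nat.
Qed.

Lemma S_pos : 0 < Ssum.
Proof. pose proof (symsum_term_lim w Ssum 0%Z (fun z => Rlt_le _ _ (Hw z)) HwS). pose proof (Hw 0%Z). lra. Qed.

Lemma dominate x t : 0 <= t -> w x * v t x <= w y.
Proof.
  intros Ht. apply (symsum_term_lim (fun z => w z * v t z)).
  intros z. pose proof (Hw z). pose proof (Hv01 t z Ht). nra.
  apply stat_sum; auto.
Qed.

Lemma main_conv x : tlim (fun t => v t x) (w y / Ssum).
Proof.
  intros eps He. pose proof S_pos.
  assert (Hw0 : forall z, 0 <= w z) by (intros z; apply Rlt_le, Hw).
  destruct (dct (fun t z => w z * (v t x - v t z)) (fun _ => 0) w Mw 0 0 Hw0 HwM) with (eps := eps * Ssum)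
    as [T HT].
  - intros t z Ht. rewrite Rabs_mult, (Rabs_right (w z)) by (apply Rle_ge; auto).
    pose proof (Hv01 t x Ht); pose proof (Hv01 t z Ht). pose proof (Hw z).
    assert (Rabs (v t x - v t z) <= 1) by (apply Rabs_le; lra). nra.
  - intros z. replace 0 with (w z * 0) by ring. apply tlim_scal. apply diff_tlim.
  - apply cv_ext with (u := fun _ => 0). intros n. rewrite symsum_zero; auto. apply cv_const.
  - nra.
  - exists (Rmax T 0). intros t Ht. pose proof (Rmax_l T 0); pose proof (Rmax_r T 0).
    specialize (HT t (v t x * Ssum - w y) ltac:(lra)).
    assert (Un_cv (symsum (fun z => w z * (v t x - v t z))) (v t x * Ssum - w y)).
    { apply cv_ext with (u := fun N => v t x * symsum w N - symsum (fun z => w z * v t z) N).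
      intros n. rewrite <- symsum_scal, <- symsum_minus. apply symsum_ext. intros; ring.
      apply CV_minus. apply CV_mult. apply cv_const. auto. apply stat_sum. lra. }
    specialize (HT H2). rewrite Rminus_0_r in HT.
    replace (v t x - w y / Ssum) with ((v t x * Ssum - w y) / Ssum) by (field; lra).
    unfold Rdiv. rewrite Rabs_mult, Rabs_inv, (Rabs_right Ssum) by lra.
    apply Rmult_lt_reg_r with Ssum; auto. rewrite Rmult_assoc, Rinv_l by lra. lra.
Qed.

End Core.

Lemma wprod_S c d e n : wprod c d e (S n) = wprod c d e n * (c / (d + INR (S n) * e)).
Proof. reflexivity. Qed.

Lemma wprod_pos c d e n : 0 < c -> 0 < d -> 0 < e -> 0 < wprod c d e n.
Proof.
  intros Hc Hd He. induction n. simpl. lra. rewrite wprod_S.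
  apply Rmult_lt_0_compat; auto. apply Rdiv_lt_0_compat; auto.
  pose proof (pos_INR (S n)). nra.
Qed.

Lemma sw_nat al be th ga n : stat_weight al be th ga (Z.of_nat n) = wprod al be th n.
Proof. unfold stat_weight. destruct (Z.leb_spec 0 (Z.of_nat n)); [|lia]. rewrite Nat2Z.id. auto. Qed.

Lemma sw_neg al be th ga n : stat_weight al be th ga (- Z.of_nat n)%Z = wprod be al ga n.
Proof. unfold stat_weight. destruct (Z.leb_spec 0 (- Z.of_nat n)).
  - replace n with 0%nat by lia. simpl. reflexivity.
  - rewrite Z.opp_involutive, Nat2Z.id. auto. Qed.

Lemma zpos_nat n : zpos (Z.of_nat n) = INR n.
Proof. unfold zpos. rewrite Z.max_r by lia. symmetry; apply INR_IZR_INZ. Qed.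
Lemma zneg_nat n : zneg (Z.of_nat n) = 0.
Proof. unfold zneg. rewrite Z.max_l by lia. reflexivity. Qed.
Lemma zpos_neg n : zpos (- Z.of_nat n)%Z = 0.
Proof. unfold zpos. rewrite Z.max_l by lia. reflexivity. Qed.
Lemma zneg_neg n : zneg (- Z.of_nat n)%Z = INR n.
Proof. unfold zneg. rewrite Z.max_r by lia. rewrite Z.opp_involutive. symmetry; apply INR_IZR_INZ. Qed.

Lemma Z_cases (z : Z) : (exists n, z = Z.of_nat n) \/ (exists n, z = (- Z.of_nat (S n))%Z).
Proof.
  destruct (Z_le_gt_dec 0 z).
  - left. exists (Z.to_nat z). lia.
  - right. exists (Z.to_nat (- z - 1)). lia.
Qed.

Section Rates.
Variables al be th ga : R.
Hypotheses (Hal : 0 < al) (Hbe : 0 < be) (Hth : 0 < th) (Hga : 0 < ga).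

Definition sw := stat_weight al be th ga.
Definition lamr := birth al ga.
Definition mur := death be th.

Lemma sw_pos z : 0 < sw z.
Proof. unfold sw, stat_weight. destruct (0 <=? z)%Z; apply wprod_pos; auto. Qed.

Lemma lam_pos z : 0 < lamr z.
Proof. unfold lamr, birth, zneg. pose proof (IZR_le 0 (Z.max 0 (- z)) ltac:(lia)). nra. Qed.

Lemma mu_nonneg z : 0 <= mur z.
Proof. unfold mur, death, zpos. pose proof (IZR_le 0 (Z.max 0 z) ltac:(lia)). nra. Qed.

Lemma db z : sw z * lamr z = sw (z + 1)%Z * mur (z + 1)%Z.
Proof.
  unfold sw, lamr, mur, birth, death.
  destruct (Z_cases z) as [[n ->]|[n ->]].
  - replace (Z.of_nat n + 1)%Z with (Z.of_nat (S n)) by lia.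
    rewrite !sw_nat, zneg_nat, zpos_nat, wprod_S.
    pose proof (pos_INR (S n)). field. nra.
  - replace (- Z.of_nat (S n) + 1)%Z with (- Z.of_nat n)%Z by lia.
    rewrite !sw_neg, zneg_neg, zpos_neg, wprod_S.
    pose proof (pos_INR (S n)). field. nra.
Qed.

Lemma kap z : Rmin th ga <= lamr z - lamr (z+1)%Z + mur (z+1)%Z - mur z.
Proof.
  pose proof (Rmin_l th ga). pose proof (Rmin_r th ga).
  unfold lamr, mur, birth, death.
  destruct (Z_cases z) as [[n ->]|[n ->]].
  - replace (Z.of_nat n + 1)%Z with (Z.of_nat (S n)) by lia.
    rewrite !zneg_nat, !zpos_nat, S_INR. lra.
  - replace (- Z.of_nat (S n) + 1)%Z with (- Z.of_nat n)%Z by lia.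
    rewrite !zneg_neg, !zpos_neg, S_INR. lra.
Qed.

Lemma ratio_sum (p : nat -> R) K : (forall n, 0 <= p n) -> (forall n, (K <= n)%nat -> p (S n) <= p n / 2) ->
  forall n, sum_f_R0 p n <= sum_f_R0 p K + p K.
Proof.
  intros H0 HK.
  assert (Hinv : forall j, sum_f_R0 p (K + j) + p (K + j)%nat <= sum_f_R0 p K + p K).
  { induction j. rewrite Nat.add_0_r; lra.
    replace (K + S j)%nat with (S (K + j)) by lia. rewrite tech5.
    specialize (HK (K + j)%nat ltac:(lia)). lra. }
  intros n. destruct (le_lt_dec K n).
  - specialize (Hinv (n - K)%nat). replace (K + (n - K))%nat with n in Hinv by lia.
    pose proof (H0 n). lra.
  - assert (forall j, sum_f_R0 p n <= sum_f_R0 p (n + j)).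
    { induction j. rewrite Nat.add_0_r; lra. replace (n + S j)%nat with (S (n + j)) by lia.
      rewrite tech5. pose proof (H0 (S (n + j))). lra. }
    specialize (H (K - n)%nat). replace (n + (K - n))%nat with K in H by lia. pose proof (H0 K). lra.
Qed.

Lemma wprod_ratio c d e s : 0 < c -> 0 < d -> 0 < e ->
  exists K, forall n, (K <= n)%nat ->
    wprod c d e (S n) * exp (s * INR (S n)) <= wprod c d e n * exp (s * INR n) / 2.
Proof.
  intros Hc Hd He.
  destruct (archimed (2 * c * exp s / e)) as [Hup _].
  set (K := Z.to_nat (up (2 * c * exp s / e))).
  exists K. intros n Hn.
  assert (HK : 2 * c * exp s / e <= INR (S n)).
  { apply Rle_trans with (IZR (up (2 * c * exp s / e))). lra.
    rewrite INR_IZR_INZ. apply IZR_le. unfold K in Hn. lia. }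
  rewrite wprod_S. rewrite S_INR. rewrite Rmult_plus_distr_l, Rmult_1_r, exp_plus.
  pose proof (wprod_pos c d e n Hc Hd He). pose proof (exp_pos (s * INR n)). pose proof (exp_pos s).
  rewrite <- S_INR.
  assert (c / (d + INR (S n) * e) * exp s <= 1/2).
  { assert (2 * c * exp s <= INR (S n) * e).
    { apply Rmult_le_reg_r with (/ e). apply Rinv_0_lt_compat; lra.
      replace (INR (S n) * e * / e) with (INR (S n)) by (field; lra). exact HK. }
    assert (0 < d + INR (S n) * e) by (pose proof (pos_INR (S n)); nra).
    apply Rmult_le_reg_r with (d + INR (S n) * e); auto.
    replace (c / (d + INR (S n) * e) * exp s * (d + INR (S n) * e)) with (c * exp s) by (field; lra).
    lra. }
  set (W := wprod c d e n * exp (s * INR n)).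
  assert (0 < W) by (unfold W; nra).
  replace (wprod c d e n * (c / (d + INR (S n) * e)) * (exp (s * INR n) * exp s))
    with (W * (c / (d + INR (S n) * e) * exp s)) by (unfold W; ring).
  nra.
Qed.

Lemma abs_nat n : Rabs (IZR (Z.of_nat n)) = INR n.
Proof. rewrite <- INR_IZR_INZ. apply Rabs_right, Rle_ge, pos_INR. Qed.
Lemma abs_neg n : Rabs (IZR (- Z.of_nat n)) = INR n.
Proof. rewrite Ropp_Ropp_IZR, <- INR_IZR_INZ, Rabs_Ropp. apply Rabs_right, Rle_ge, pos_INR. Qed.

Definition hs (s : R) (z : Z) := sw z * exp (s * Rabs (IZR z)).

Lemma hs_nonneg s z : 0 <= hs s z.
Proof. unfold hs. pose proof (sw_pos z). pose proof (exp_pos (s * Rabs (IZR z))). nra. Qed.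

Lemma hs_bounded s : exists M, forall N, symsum (hs s) N <= M.
Proof.
  set (p := fun n => wprod al be th n * exp (s * INR n)).
  set (q := fun n => wprod be al ga n * exp (s * INR n)).
  assert (Hp : forall n, 0 <= p n) by (intros n; unfold p; pose proof (wprod_pos al be th n Hal Hbe Hth); pose proof (exp_pos (s * INR n)); nra).
  assert (Hq : forall n, 0 <= q n) by (intros n; unfold q; pose proof (wprod_pos be al ga n Hbe Hal Hga); pose proof (exp_pos (s * INR n)); nra).
  destruct (wprod_ratio al be th s Hal Hbe Hth) as [K1 HK1].
  destruct (wprod_ratio be al ga s Hbe Hal Hga) as [K2 HK2].
  exists ((sum_f_R0 p K1 + p K1) + (sum_f_R0 q K2 + q K2)).
  intros N.
  assert (symsum (hs s) N <= sum_f_R0 p N + sum_f_R0 q N).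
  { induction N.
    - rewrite symsum_0. unfold hs, sw. simpl. replace 0%Z with (Z.of_nat 0) by reflexivity.
      rewrite sw_nat. pose proof (Hq 0%nat). unfold p. simpl. rewrite Rabs_R0. lra.
    - rewrite symsum_S, !tech5.
      assert (E1 : hs s (Z.of_nat (S N)) = p (S N)).
      { unfold hs, sw, p. rewrite sw_nat, abs_nat. reflexivity. }
      assert (E2 : hs s (- Z.of_nat (S N))%Z = q (S N)).
      { unfold hs, sw, q. rewrite sw_neg, abs_neg. reflexivity. }
      lra. }
  pose proof (ratio_sum p K1 Hp HK1 N). pose proof (ratio_sum q K2 Hq HK2 N). lra.
Qed.

Lemma exp_ge1 x : 0 <= x -> 1 <= exp x.
Proof. intros. pose proof (exp_ineq1_le x). lra. Qed.
Lemma exp_gex x : x <= exp x.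
Proof. pose proof (exp_ineq1_le x). lra. Qed.

Lemma hs1_nat n : hs 1 (Z.of_nat n) = sw (Z.of_nat n) * exp (INR n).
Proof. unfold hs. rewrite abs_nat, Rmult_1_l. reflexivity. Qed.
Lemma hs1_neg n : hs 1 (- Z.of_nat n)%Z = sw (- Z.of_nat n)%Z * exp (INR n).
Proof. unfold hs. rewrite abs_neg, Rmult_1_l. reflexivity. Qed.

Lemma terms_to0 (h : Z -> R) M : (forall z, 0 <= h z) -> (forall N, symsum h N <= M) ->
  Un_cv (fun N => h (Z.of_nat N) + h (- Z.of_nat N)%Z) 0.
Proof.
  intros H0 HM. destruct (bounded_cv h M H0 HM) as [l Hl].
  intros eps He. destruct (Hl (eps/2) ltac:(lra)) as [K HK].
  exists (S K). intros n Hn. destruct n. lia.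
  pose proof (HK n ltac:(lia)). pose proof (HK (S n) ltac:(lia)).
  unfold Rdist in *. rewrite symsum_S in H1.
  rewrite Rminus_0_r. apply Rabs_def2 in H. apply Rabs_def2 in H1.
  pose proof (H0 (Z.of_nat (S n))). pose proof (H0 (- Z.of_nat (S n))%Z).
  rewrite Rabs_right by lra. lra.
Qed.

Lemma squeeze0 (x q : nat -> R) C : 0 <= C -> (forall n, 0 <= x n <= C * q n) -> Un_cv q 0 -> Un_cv x 0.
Proof.
  intros HC H Hq eps He. destruct (Hq (eps / (C + 1))) as [K HK].
  { apply Rdiv_lt_0_compat; lra. }
  exists K. intros n Hn. specialize (HK n Hn). specialize (H n). unfold Rdist in *.
  rewrite Rminus_0_r in *. rewrite Rabs_right by lra.
  pose proof (Rle_abs (q n)).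
  pose proof (Rabs_pos (q n)).
  assert (C * q n <= C * Rabs (q n)) by (apply Rmult_le_compat_l; lra).
  apply Rle_lt_trans with ((C + 1) * Rabs (q n)). nra.
  replace eps with ((C + 1) * (eps / (C + 1))) by (field; lra).
  apply Rmult_lt_compat_l; lra.
Qed.

Lemma hs1_to0 : Un_cv (fun N => hs 1 (Z.of_nat N) + hs 1 (- Z.of_nat N)%Z) 0.
Proof. destruct (hs_bounded 1) as [M HM]. eapply terms_to0; eauto. apply hs_nonneg. Qed.

Lemma lamr_nat n : lamr (Z.of_nat n) = al.
Proof. unfold lamr, birth. rewrite zneg_nat. ring. Qed.
Lemma lamr_neg n : lamr (- Z.of_nat n)%Z = al + INR n * ga.
Proof. unfold lamr, birth. rewrite zneg_neg. ring. Qed.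
Lemma mur_neg n : mur (- Z.of_nat n)%Z = be.
Proof. unfold mur, death. rewrite zpos_neg. ring. Qed.

Lemma Hb1r : Un_cv (fun N => a lamr sw (Z.of_nat N) + a lamr sw (- Z.of_nat N - 1)%Z) 0.
Proof.
  apply squeeze0 with (C := al + be) (q := fun N => hs 1 (Z.of_nat N) + hs 1 (- Z.of_nat N)%Z).
  3: apply hs1_to0. 1: nra.
  intros n. unfold a.
  rewrite (db (- Z.of_nat n - 1)%Z). replace (- Z.of_nat n - 1 + 1)%Z with (- Z.of_nat n)%Z by ring.
  rewrite lamr_nat, mur_neg, hs1_nat, hs1_neg.
  pose proof (sw_pos (Z.of_nat n)). pose proof (sw_pos (- Z.of_nat n)%Z).
  pose proof (exp_ge1 (INR n) (pos_INR n)).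
  set (E := exp (INR n)) in *. set (p := sw (Z.of_nat n)) in *. set (q := sw (- Z.of_nat n)%Z) in *.
  assert (0 < al * p) by nra. assert (0 < be * q) by nra.
  assert (p * al <= al * (p * E)) by (replace (al * (p * E)) with ((al * p) * E) by ring; nra).
  assert (q * be <= be * (q * E)) by (replace (be * (q * E)) with ((be * q) * E) by ring; nra).
  assert (0 <= al * (q * E)) by (replace (al * (q * E)) with ((al * q) * E) by ring; apply Rmult_le_pos; nra).
  assert (0 <= be * (p * E)) by (replace (be * (p * E)) with ((be * p) * E) by ring; apply Rmult_le_pos; nra).
  split. nra. replace ((al + be) * (p * E + q * E)) with (al * (p * E) + be * (q * E) + al * (q * E) + be * (p * E)) by ring. lra.
Qed.

Lemma Hb2r : Un_cv (fun N => a lamr sw (Z.of_nat N) * lamr (Z.of_nat N + 1)%Z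
                    + a lamr sw (- Z.of_nat N)%Z * mur (- Z.of_nat N)%Z) 0.
Proof.
  apply squeeze0 with (C := al * al + (al + ga) * be) (q := fun N => hs 1 (Z.of_nat N) + hs 1 (- Z.of_nat N)%Z).
  3: apply hs1_to0. 1: nra.
  intros n. unfold a.
  replace (Z.of_nat n + 1)%Z with (Z.of_nat (S n)) by lia.
  rewrite !lamr_nat, lamr_neg, mur_neg, hs1_nat, hs1_neg.
  pose proof (sw_pos (Z.of_nat n)). pose proof (sw_pos (- Z.of_nat n)%Z).
  pose proof (exp_ge1 (INR n) (pos_INR n)). pose proof (exp_gex (INR n)). pose proof (pos_INR n).
  set (E := exp (INR n)) in *. set (p := sw (Z.of_nat n)) in *. set (q := sw (- Z.of_nat n)%Z) in *.
  assert (Hpa : 0 <= al * al * p) by (apply Rmult_le_pos; nra).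
  assert (Hqb : 0 < q * be) by nra.
  assert (A1 : al * al * p * 1 <= al * al * p * E) by (apply Rmult_le_compat_l; lra).
  assert (A2 : al * 1 <= al * E) by (apply Rmult_le_compat_l; lra).
  assert (A3 : INR n * ga <= E * ga) by (apply Rmult_le_compat_r; lra).
  assert (A4 : q * be * (al + INR n * ga) <= q * be * ((al + ga) * E)) by (apply Rmult_le_compat_l; lra).
  assert (A5 : 0 <= al * al * (q * E)) by (apply Rmult_le_pos; [nra| apply Rmult_le_pos; lra]).
  assert (A6 : 0 <= (al + ga) * be * (p * E)) by (apply Rmult_le_pos; [nra| apply Rmult_le_pos; lra]).
  assert (A7 : 0 <= q * be * (al + INR n * ga)) by (apply Rmult_le_pos; nra).
  split.
  - replace (p * al * al + q * (al + INR n * ga) * be) with (al * al * p + q * be * (al + INR n * ga)) by ring. lra.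
  - replace (p * al * al + q * (al + INR n * ga) * be) with (al * al * p * 1 + q * be * (al + INR n * ga)) by ring.
    replace ((al * al + (al + ga) * be) * (p * E + q * E)) with
      (al * al * p * E + q * be * ((al + ga) * E) + al * al * (q * E) + (al + ga) * be * (p * E)) by ring.
    lra.
Qed.

Lemma zneg_le z : zneg z <= Rabs (IZR z).
Proof. destruct (Z_cases z) as [[n ->]|[n ->]].
  rewrite zneg_nat, abs_nat. apply pos_INR. rewrite zneg_neg, abs_neg. lra. Qed.

Lemma Har : exists M, forall N, symsum (a lamr sw) N <= M.
Proof.
  destruct (hs_bounded 1) as [M HM]. exists ((al + ga) * M). intros N.
  apply Rle_trans with ((al + ga) * symsum (hs 1) N).
  2:{ apply Rmult_le_compat_l; [lra| apply HM]. }
  rewrite <- symsum_scal. apply symsum_le. intros z. unfold a, hs, lamr, birth.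
  rewrite Rmult_1_l. pose proof (zneg_le z). pose proof (exp_ge1 _ (Rabs_pos (IZR z))).
  pose proof (exp_gex (Rabs (IZR z))). pose proof (sw_pos z).
  assert (0 <= zneg z) by (unfold zneg; apply IZR_le; lia).
  assert (al + zneg z * ga <= (al + ga) * exp (Rabs (IZR z))) by nra. nra.
Qed.

End Rates.

Lemma key (al be th ga : R) (P : R -> Z -> Z -> R) (S : R) :
  0 < al -> 0 < be -> 0 < th -> 0 < ga ->
  bd_transition al be th ga P ->
  Zhas_sum (stat_weight al be th ga) S ->
  forall (x : Z) (f : Z -> R) (s : R), 0 <= s -> (forall y, Rabs (f y) <= exp (s * Rabs (IZR y))) ->
     exists L,
       Zhas_sum (fun i => f i * (stat_weight al be th ga i / S)) L /\
       Zsum_tends (fun t y => P t x y * f y) L.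
Proof.
  intros Hal Hbe Hth Hga [HP0 [HP1 [HPid [HPc HPd]]]] [[Mw HwM'] HwS] x f s Hs Hf.
  fold (sw al be th ga) in *.
  assert (HwM : forall N, symsum (sw al be th ga) N <= Mw).
  { intros N. rewrite <- (HwM' N). right. apply symsum_ext. intros z _.
    rewrite Rabs_right; auto. apply Rle_ge, Rlt_le, sw_pos; auto. }
  destruct (Har al be th ga Hal Hbe Hth Hga) as [Ma Ha].
  assert (Hv01 : forall y t z, 0 <= t -> 0 <= P t z y <= 1).
  { intros y t z Ht. split. apply HP0; auto.
    eapply Rle_trans; [|apply (HP1 t z (Z.abs_nat y) Ht)].
    apply (symsum_term (P t z)). intros; apply HP0; auto. unfold inr; lia. }
  assert (Hm : 0 < Rmin th ga) by (apply Rmin_pos; auto).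
  assert (HS : 0 < S).
  { pose proof (symsum_term_lim (sw al be th ga) S 0%Z (fun z => Rlt_le _ _ (sw_pos al be th ga Hal Hbe Hth Hga z)) HwS).
    pose proof (sw_pos al be th ga Hal Hbe Hth Hga 0%Z). lra. }
  assert (H1 : forall z, 0 < sw al be th ga z) by (intros; apply sw_pos; auto).
  assert (H2 : forall z, 0 <= lamr al ga z) by (intros; apply Rlt_le, lam_pos; auto).
  assert (H3 : forall z, 0 < lamr al ga z) by (intros; apply lam_pos; auto).
  assert (H4 : forall z, 0 <= mur be th z) by (intros; apply mu_nonneg; auto).
  assert (H5 : forall z, sw al be th ga z * lamr al ga z = sw al be th ga (z+1)%Z * mur be th (z+1)%Z)
    by (intros; apply db; auto).
  assert (H6 : forall z, Rmin th ga <= lamr al ga z - lamr al ga (z+1)%Z + mur be th (z+1)%Z - mur be th z)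
    by (intros; apply kap; auto).
  assert (H7 : forall y z, rc0 (fun t => P t z y)) by (intros y z eps He; apply HPc; auto).
  assert (H8 : forall y t z, 0 < t -> derivable_pt_lim (fun u => P u z y) t (Lv (lamr al ga) (mur be th) (fun t z => P t z y) t z))
    by (intros y t z Ht; unfold Lv, lamr, mur; apply HPd; auto).
  pose proof (Hb1r al be th ga Hal Hbe Hth Hga) as H9.
  pose proof (Hb2r al be th ga Hal Hbe Hth Hga) as H10.
  assert (Hconv : forall y, tlim (fun t => P t x y) (sw al be th ga y / S)).
  { intros y.
    exact (main_conv (lamr al ga) (mur be th) (sw al be th ga) (fun t z => P t z y) y (Rmin th ga) S Ma Mw
      H1 H2 H3 H4 H5 Hm H6 (Hv01 y) (fun z => HPid z y) (H7 y) (H8 y) H9 H10 Ha HwS HwM x). }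
  assert (Hdom : forall y t, 0 <= t -> sw al be th ga x * P t x y <= sw al be th ga y).
  { intros y t Ht.
    exact (dominate (lamr al ga) (mur be th) (sw al be th ga) (fun t z => P t z y) y
      H1 H2 H5 (Hv01 y) (fun z => HPid z y) (H7 y) (H8 y) H9 x t Ht). }
  destruct (hs_bounded al be th ga Hal Hbe Hth Hga s) as [Ms HMs].
  pose proof (sw_pos al be th ga Hal Hbe Hth Hga x) as Hwx.
  set (h := fun y => / sw al be th ga x * hs al be th ga s y).
  assert (Hh0 : forall y, 0 <= h y).
  { intros y. unfold h. apply Rmult_le_pos. apply Rlt_le, Rinv_0_lt_compat; auto. apply hs_nonneg; auto. }
  assert (HhM : forall N, symsum h N <= / sw al be th ga x * Ms).
  { intros N. unfold h. rewrite symsum_scal. apply Rmult_le_compat_l. apply Rlt_le, Rinv_0_lt_compat; auto. auto. }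
  assert (HFd : forall t y, 0 <= t -> Rabs (P t x y * f y) <= h y).
  { intros t y Ht. unfold h, hs. rewrite Rabs_mult. pose proof (Hdom y t Ht). pose proof (Hv01 y t x Ht).
    rewrite Rabs_right by lra. pose proof (Hf y). pose proof (Rabs_pos (f y)).
    assert (P t x y <= / sw al be th ga x * sw al be th ga y).
    { apply Rmult_le_reg_l with (sw al be th ga x); auto. rewrite <- Rmult_assoc, Rinv_r by lra. lra. }
    assert (0 <= / sw al be th ga x * sw al be th ga y).
    { apply Rmult_le_pos. apply Rlt_le, Rinv_0_lt_compat; auto. apply Rlt_le, sw_pos; auto. }
    replace (/ sw al be th ga x * (sw al be th ga y * exp (s * Rabs (IZR y))))
      with ((/ sw al be th ga x * sw al be th ga y) * exp (s * Rabs (IZR y))) by ring.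
    apply Rmult_le_compat; lra. }
  destruct (exists_sum (fun i => f i * (sw al be th ga i / S)) (fun i => / S * hs al be th ga s i) (/ S * Ms))
    as [L HL].
  { intros z. unfold hs. rewrite Rabs_mult. pose proof (Hf z). pose proof (Rabs_pos (f z)).
    pose proof (sw_pos al be th ga Hal Hbe Hth Hga z).
    rewrite (Rabs_right (sw al be th ga z / S)) by (apply Rle_ge, Rlt_le, Rdiv_lt_0_compat; auto).
    replace (/ S * (sw al be th ga z * exp (s * Rabs (IZR z)))) with (exp (s * Rabs (IZR z)) * (sw al be th ga z / S))
      by (unfold Rdiv; ring).
    apply Rmult_le_compat_r; auto. apply Rlt_le, Rdiv_lt_0_compat; auto. }
  { intros N. rewrite symsum_scal. apply Rmult_le_compat_l. apply Rlt_le, Rinv_0_lt_compat; auto. auto. }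
  exists L. split; auto.
  split.
  - exists 0. intros t Ht. apply (exists_sum _ h (/ sw al be th ga x * Ms)); auto.
  - intros eps He.
    destruct (dct (fun t y => P t x y * f y) (fun y => f y * (sw al be th ga y / S)) h
                  (/ sw al be th ga x * Ms) 0 L Hh0 HhM) with (eps := eps) as [T HT]; auto.
    + intros z. apply tlim_ext with (f := fun t => f z * P t x z).
      intros; ring. replace (f z * (sw al be th ga z / S)) with (f z * (sw al be th ga z / S)) by ring.
      apply tlim_scal. auto.
    + apply HL.
    + exists T. intros t e Ht He'. apply (HT t e Ht). apply He'.
Qed.

Theorem lemma1 (al be th ga : R) (P : R -> Z -> Z -> R) (S : R) :
  0 < al -> 0 < be -> 0 < th -> 0 < ga ->
  bd_transition al be th ga P ->
  Zhas_sum (stat_weight al be th ga) S ->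
  (forall (x : Z) (s : R), 0 <= s ->
     exists L,
       Zhas_sum (fun i => exp (s * Rabs (IZR i)) * (stat_weight al be th ga i / S)) L /\
       Zsum_tends (fun t y => P t x y * exp (s * Rabs (IZR y))) L) /\
  (forall (x : Z) (f : Z -> R),
     (exists s, 0 <= s /\ forall y, Rabs (f y) <= exp (s * Rabs (IZR y))) ->
     exists L,
       Zhas_sum (fun i => f i * (stat_weight al be th ga i / S)) L /\
       Zsum_tends (fun t y => P t x y * f y) L).
Proof.
  intros Hal Hbe Hth Hga HP HS. split.
  - intros x s Hs. apply (key al be th ga P S Hal Hbe Hth Hga HP HS x (fun y => exp (s * Rabs (IZR y))) s Hs).
    intros y. rewrite Rabs_right. lra. apply Rle_ge, Rlt_le, exp_pos.
  - intros x f [s [Hs Hf]]. apply (key al be th ga P S Hal Hbe Hth Hga HP HS x f s Hs Hf).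
Qed.
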